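(* Let $J_1,J_2$ be Möbius involutions of $\overline{\mathbb{C}}$ and $q_1,q_2$ polynomials of degree $d+1$. If the correspondences $J_1\circ\mathrm{Cov}_0^{q_1}$ and $J_2\circ\mathrm{Cov}_0^{q_2}$ are conformally conjugate, then $J_1$ and $J_2$ are conformally conjugate, and $q_1$ and $q_2$ are conformal covering equivalent.
   Context: Correspondences are subsets of $\overline{\mathbb{C}}\times\overline{\mathbb{C}}$; composition $G\circ F=\{(z,w):\exists v,(z,v)\in F,(v,w)\in G\}$; a map is identified with its graph. Conformal conjugacy of correspondences $F_1,F_2$: $F_2=\phi\circ F_1\circ\phi^{-1}$ for a Möbius map $\phi$. Deleted covering correspondence of a rational $q$: $\mathrm{Cov}_0^q=\{(z,w):(q(z)-q(w))/(z-w)=0\}$ (i.e. $\{q(z)=q(w)\}$ with one copy of the diagonal removed). Rational maps $q_1,q_2$ are conformal covering equivalent if there are Möbius maps $\phi,\psi$ with $q_2=\psi\circ q_1\circ\phi$. *)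

(* Defs.v *)
From HB Require Import structures.
From mathcomp Require Import all_boot all_order all_algebra.
From mathcomp Require Import complex.
From mathcomp Require Import reals.
Set Implicit Arguments. Unset Strict Implicit. Unset Printing Implicit Defensive.
Import Order.TTheory GRing.Theory Num.Theory.
Local Open Scope ring_scope.

Section Sphere.
Variable R : realType.
Definition C := R[i].

(* The Riemann sphere: Some z = finite point z, None = infinity. *)
Definition sphere := option C.

Definition corr := sphere -> sphere -> Prop.

Definition corr_comp (G F : corr) : corr :=
  fun z w => exists v, F z v /\ G v w.

Definition graph (f : sphere -> sphere) : corr := fun z w => f z = w.

Definition corr_eq (F G : corr) : Prop := forall z w, F z w <-> G z w.

Record mobius := Mobius {
  mob_a : C; mob_b : C; mob_c : C; mob_d : C;
  mob_det : mob_a * mob_d - mob_b * mob_c != 0 }.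

Definition mob_app (m : mobius) (z : sphere) : sphere :=
  let: Mobius a b c d _ := m in
  match z with
  | None => if c == 0 then None else Some (a / c)
  | Some x => if c * x + d == 0 then None else Some ((a * x + b) / (c * x + d))
  end.

Definition graph_inv (phi : mobius) : corr := fun z w => mob_app phi w = z.

Definition mob_conj_corr (phi : mobius) (F : corr) : corr :=
  corr_comp (graph (mob_app phi)) (corr_comp F (graph_inv phi)).

Definition conformally_conjugate (F1 F2 : corr) : Prop :=
  exists phi : mobius, corr_eq F2 (mob_conj_corr phi F1).

Definition mob_involution (J : mobius) : Prop :=
  (forall z, mob_app J (mob_app J z) = z) /\ ~ (forall z, mob_app J z = z).

Definition poly_sphere (q : {poly C}) (z : sphere) : sphere :=
  match z with None => None | Some x => Some q.[x] end.

(* Deleted covering correspondence: zero set in the sphere x sphere of the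
   divided difference (q z - q w)/(z - w); on the diagonal this quotient is
   q'(z); at infinity the only point of the (closed) zero set is (oo,oo),
   present exactly when deg q >= 2. *)
Definition Cov0 (q : {poly C}) : corr := fun z w =>
  match z, w with
  | Some x, Some y => (x != y /\ q.[x] = q.[y]) \/ (x = y /\ (q^`()).[x] = 0)
  | None, None => (2 < size q)%N
  | _, _ => False
  end.

Definition covering_equivalent (q1 q2 : {poly C}) : Prop :=
  exists phi psi : mobius, forall z,
    poly_sphere q2 z = mob_app psi (poly_sphere q1 (mob_app phi z)).

End Sphere.

(* Main.v *)
Require Import Defs.
From HB Require Import structures.
From mathcomp Require Import all_boot all_order all_algebra.
From mathcomp Require Import complex reals.
From mathcomp Require Import all_field ring.
From Stdlib Require Import Classical.
Import GRing.Theory Num.Theory.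
Local Open Scope ring_scope.

Module Aux.
Set Implicit Arguments. Unset Strict Implicit. Unset Printing Implicit Defensive.


Ltac nz := repeat (apply/andP; split); rewrite ?andbT; try done; try (apply/eqP; assumption); try (match goal with H : _ |- _ => exact: H end).

Section Mob.
Variable R : realType.
Local Notation CC := (C R).
Local Notation mob := (mobius R).

Lemma det_ker (a b c d x : CC) : a * d - b * c != 0 -> c * x + d = 0 -> a * x + b != 0.
Proof.
move=> hdet hc; apply/eqP => ha; move/eqP: hdet; apply.
have -> : d = - (c * x) by apply/eqP; rewrite -addr_eq0 addrC hc.
have -> : b = - (a * x) by apply/eqP; rewrite -addr_eq0 addrC ha.
ring.
Qed.

Definition mob_mul (m1 m2 : mob) : mob.
Proof.
case: m1 => a1 b1 c1 d1 h1; case: m2 => a2 b2 c2 d2 h2.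
refine (@Mobius R (a1*a2+b1*c2) (a1*b2+b1*d2) (c1*a2+d1*c2) (c1*b2+d1*d2) _).
have -> : (a1 * a2 + b1 * c2) * (c1 * b2 + d1 * d2) - (a1 * b2 + b1 * d2) * (c1 * a2 + d1 * c2)
  = (a1 * d1 - b1 * c1) * (a2 * d2 - b2 * c2) by ring.
exact: mulf_neq0.
Defined.

Lemma mob_mulE m1 m2 z : mob_app (mob_mul m1 m2) z = mob_app m1 (mob_app m2 z).
Proof.
case: m1 => a1 b1 c1 d1 h1; case: m2 => a2 b2 c2 d2 h2 /=.
case: z => [x|] /=.
- have [hx|hx] := eqVneq (c2 * x + d2) 0.
  + have hn := det_ker h2 hx.
    have -> : (c1 * a2 + d1 * c2) * x + (c1 * b2 + d1 * d2) = c1 * (a2 * x + b2) + d1 * (c2 * x + d2) by ring.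
    rewrite hx mulr0 addr0 mulf_eq0 (negbTE hn) orbF /=.
    case: eqP => // hc1; congr Some.
    have -> : (a1 * a2 + b1 * c2) * x + (a1 * b2 + b1 * d2) = a1 * (a2 * x + b2) + b1 * (c2 * x + d2) by ring.
    rewrite hx mulr0 addr0; field; nz.
  + have hE : (c1 * a2 + d1 * c2) * x + (c1 * b2 + d1 * d2) = (c2 * x + d2) * (c1 * ((a2 * x + b2) / (c2 * x + d2)) + d1) by field.
    have hN : (a1 * a2 + b1 * c2) * x + (a1 * b2 + b1 * d2) = (c2 * x + d2) * (a1 * ((a2 * x + b2) / (c2 * x + d2)) + b1) by field.
    rewrite hE hN mulf_eq0 (negbTE hx) /=.
    case: eqP => // hy; congr Some; rewrite -mulf_div divff ?mul1r //.
- have [hc2|hc2] := eqVneq c2 0.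
  + rewrite hc2 mulr0 addr0 ?eqxx /=.
    have ha2 : a2 != 0 by apply: contraNneq h2 => ->; rewrite hc2 !mul0r mulr0 subrr.
    rewrite mulf_eq0 (negbTE ha2) orbF.
    case: eqP => // hc1; congr Some; rewrite mulr0 addr0; field; nz.
  +
    have hE : c1 * a2 + d1 * c2 = c2 * (c1 * (a2 / c2) + d1) by field.
    rewrite [X in X == 0]hE mulf_eq0 (negbTE hc2) /=.
    case: eqP => // hy; congr Some; field; try by rewrite hc2.
    all: rewrite hE mulf_neq0 //. rewrite andbT. exact: hc2. exact/eqP.
Qed.

Lemma mob_scale (m m' : mob) (k : CC) : k != 0 ->
  mob_a m' = k * mob_a m -> mob_b m' = k * mob_b m ->
  mob_c m' = k * mob_c m -> mob_d m' = k * mob_d m ->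
  forall z, mob_app m' z = mob_app m z.
Proof.
case: m => a b c d h; case: m' => a' b' c' d' h' /= hk -> -> -> -> [x|] /=.
- have -> : k * c * x + k * d = k * (c * x + d) by ring.
  rewrite mulf_eq0 (negbTE hk) /=; case: eqP => // hx; congr Some; field.
  nz.
- rewrite mulf_eq0 (negbTE hk) /=; case: eqP => // hx; congr Some; field.
  nz.
Qed.

Lemma mob_id_app (m : mob) : mob_b m = 0 -> mob_c m = 0 -> mob_a m = mob_d m ->
  forall z, mob_app m z = z.
Proof.
case: m => a b c d h /= hb hc ha [x|] /=; last by rewrite hc eqxx.
have hd : d != 0 by apply: contraNneq h => hd; rewrite ha hd hb hc !mul0r subrr.
rewrite hb hc mul0r add0r (negbTE hd) addr0 ha; congr Some; field; nz.
Qed.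

Lemma mob_id_scalar (m : mob) : (forall z, mob_app m z = z) ->
  [/\ mob_b m = 0, mob_c m = 0 & mob_a m = mob_d m].
Proof.
case: m => a b c d h /= H.
have hc : c = 0 by move: (H None) => /=; case: eqP.
have hd : d != 0 by apply: contraNneq h => ->; rewrite hc !mulr0 subrr.
move: (H (Some 0)) (H (Some 1)) => /=; rewrite hc !mul0r !add0r (negbTE hd) !mulr0 !add0r.
move=> [hb]; rewrite mulr1 => [[ha]].
have hb' : b = 0 by move: hb => /eqP; rewrite mulf_eq0 invr_eq0 (negbTE hd) orbF => /eqP.
split => //.
by move: ha; rewrite hb' addr0 => ha; rewrite -[a](divfK hd) ha mul1r.
Qed.

Definition mob_inv (m : mob) : mob.
Proof.
case: m => a b c d h.
refine (@Mobius R d (-b) (-c) a _).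
by have -> : d * a - - b * - c = a * d - b * c by ring.
Defined.

Lemma mob_invK (m : mob) z : mob_app m (mob_app (mob_inv m) z) = z.
Proof.
rewrite -mob_mulE; apply: mob_id_app; case: m => a b c d h /=; ring.
Qed.

Lemma mob_Kinv (m : mob) z : mob_app (mob_inv m) (mob_app m z) = z.
Proof.
rewrite -mob_mulE; apply: mob_id_app; case: m => a b c d h /=; ring.
Qed.


Lemma inv_trace (J : mob) : mob_involution J -> mob_d J = - mob_a J.
Proof.
move=> [HJ Hn].
have [] := @mob_id_scalar (mob_mul J J) (fun z => etrans (mob_mulE J J z) (HJ z)).
move: Hn; case: J {HJ} => a b c d h Hn /= hb hc ha.
have [hs|hs] := eqVneq (a + d) 0; first by apply/eqP; rewrite -addr_eq0 addrC hs.
have hb0 : b = 0.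
  have : b * (a + d) = 0 by rewrite -hb; ring.
  by move/eqP; rewrite mulf_eq0 (negbTE hs) orbF => /eqP.
have hc0 : c = 0.
  have : c * (a + d) = 0 by rewrite -hc; ring.
  by move/eqP; rewrite mulf_eq0 (negbTE hs) orbF => /eqP.
have ha0 : a = d.
  have : (a - d) * (a + d) = 0.
    have -> : (a - d) * (a + d) = (a * a + b * c) - (c * b + d * d) by ring.
    by rewrite ha subrr.
  by move/eqP; rewrite mulf_eq0 (negbTE hs) orbF subr_eq0 => /eqP.
by exfalso; apply: Hn; apply: mob_id_app.
Qed.


Lemma sig_det : (1 : CC) * -1 - 0 * 0 != 0.
Proof. by rewrite mulr0 subr0 mul1r oppr_eq0 oner_eq0. Qed.
Definition sig : mob := @Mobius R 1 0 0 (-1) sig_det.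

Lemma two_neq0 : (2 : CC) != 0.
Proof. by rewrite pnatr_eq0. Qed.

Lemma conj_sigma (J : mob) : mob_involution J ->
  exists g : mob, forall z, mob_app J (mob_app g z) = mob_app g (mob_app sig z).
Proof.
move=> HJ; have := inv_trace HJ; case: J {HJ} => a b c d h hd; simpl in hd; subst d.
have [hc|hc] := eqVneq c 0.
- subst c.
  have ha : a != 0 by apply: contraNneq h => ->; rewrite mul0r mulr0 subrr.
  have hg : (1 : CC) * (- (2 * a)) - b * 0 != 0.
    by rewrite mulr0 subr0 mul1r oppr_eq0 mulf_neq0 // two_neq0.
  exists (@Mobius R 1 b 0 (- (2 * a)) hg) => z.
  rewrite -!mob_mulE; apply: (mob_scale ha) => /=; ring.
- set mu := sqrtC (a * a + b * c).
  have hmu : mu ^+ 2 = a * a + b * c by rewrite sqrtCK.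
  have hmu0 : mu != 0.
    apply: contraNneq h => hm; move: hmu; rewrite hm expr0n /= => hm2.
    have -> : a * - a - b * c = - (a * a + b * c) by ring.
    by rewrite -hm2 oppr0.
  have hg : (a + mu) * c - (a - mu) * c != 0.
    have -> : (a + mu) * c - (a - mu) * c = 2 * (c * mu) by ring.
    by rewrite !mulf_neq0 // two_neq0.
  exists (@Mobius R (a + mu) (a - mu) c c hg) => z.
  rewrite -!mob_mulE; apply: (mob_scale hmu0) => /=.
  + have -> : a * (a + mu) + b * c = (a * a + b * c) + a * mu by ring.
    rewrite -hmu; ring.
  + have -> : a * (a - mu) + b * c = (a * a + b * c) - a * mu by ring.
    rewrite -hmu; ring.
  + ring.
  + ring.
Qed.

Lemma inv_conj (J1 J2 : mob) : mob_involution J1 -> mob_involution J2 ->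
  conformally_conjugate (graph (mob_app J1)) (graph (mob_app J2)).
Proof.
move=> H1 H2.
have [g1 Hg1] := conj_sigma H1; have [g2 Hg2] := conj_sigma H2.
pose phi := mob_mul g2 (mob_inv g1).
have comm : forall u, mob_app phi (mob_app J1 u) = mob_app J2 (mob_app phi u).
  move=> u; rewrite !mob_mulE.
  rewrite -{1}(mob_invK g1 u) Hg1 mob_Kinv Hg2 //.
exists phi => z w; split.
- move=> <-; exists (mob_app J1 (mob_app (mob_inv phi) z)); split.
    by exists (mob_app (mob_inv phi) z); split => //; rewrite /graph_inv mob_invK.
  by rewrite /graph comm mob_invK.
- move=> [v [[u [hu hv]] hw]]; move: hu hv hw; rewrite /graph_inv /graph => <- <- <-.
  by rewrite comm.
Qed.

End Mob.



Section Poly.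
Variable R : realType.
Local Notation CC := (C R).

Lemma natr_inj_CC : injective (fun i : nat => (i%:R : CC)).
Proof. by move=> i j /eqP; rewrite eqr_nat => /eqP. Qed.

Lemma nonroot (p : {poly CC}) : p != 0 -> exists t, p.[t] != 0.
Proof.
move=> hp; apply/not_all_not_ex => H.
pose rs := [seq (i%:R : CC) | i <- iota 0 (size p)].
suff : (size rs < size p)%N by rewrite size_map size_iota ltnn.
apply: max_poly_roots hp _ _.
- by apply/allP => x /mapP [i _ ->]; rewrite /root; apply/negPn/negP; apply: H.
- by rewrite map_inj_uniq ?iota_uniq //; exact: natr_inj_CC.
Qed.

Lemma avoid (B : seq CC) : exists s, s \notin B.
Proof.
apply/not_all_not_ex => H.
pose rs := [seq (i%:R : CC) | i <- iota 0 (size B).+1].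
have : (size rs <= size B)%N.
  apply: uniq_leq_size; first by rewrite map_inj_uniq ?iota_uniq //; exact: natr_inj_CC.
  by move=> x _; apply/negPn/negP; apply: H.
by rewrite size_map size_iota ltnn.
Qed.

Lemma size_sum_le (I : Type) (r : seq I) (F : I -> {poly CC}) N :
  (forall i, (size (F i) <= N)%N) -> (size (\sum_(i <- r) F i)%R <= N)%N.
Proof.
move=> H; apply: (big_ind (fun p : {poly CC} => size p <= N)%N) => //; first by rewrite size_poly0.
move=> p q hp hq; apply: leq_trans (size_add _ _) _; by rewrite geq_max hp hq.
Qed.

Lemma good_fiber (q : {poly CC}) (n : nat) (s : CC) : size q = n.+1 -> (0 < n)%N ->
  (forall z, root q^`() z -> q.[z] != s) ->
  exists rs : seq CC, [/\ uniq rs, size rs = n, (forall r, r \in rs -> q.[r] = s) &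
    (forall Q : {poly CC}, (size Q <= n.+1)%N -> (forall r, r \in rs -> Q.[r] = 0) ->
       exists lam, forall x, Q.[x] = lam * (q.[x] - s))].
Proof.
move=> sq n0 hgood.
set p := q - s%:P.
have sp : size p = n.+1.
  by rewrite /p size_addl // size_opp sq; apply: leq_ltn_trans (size_polyC_leq1 s) _.
have [rs hrs] := closed_field_poly_normal p.
have p0 : p != 0 by rewrite -size_poly_eq0 sp.
have lc0 : lead_coef p != 0 by rewrite lead_coef_eq0.
have srs : size rs = n.
  by apply/eqP; rewrite -eqSS -sp hrs size_scale // size_prod_XsubC.
have hev : forall x, p.[x] = q.[x] - s by move=> x; rewrite /p hornerD hornerN hornerC.
have hroot : forall r, r \in rs -> q.[r] = s.
  move=> r hr; apply/eqP; rewrite -subr_eq0 -hev.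
  by rewrite hrs hornerZ (_ : _.[r] = 0) ?mulr0 //; apply/rootP; rewrite root_prod_XsubC.
have huniq : uniq rs.
  rewrite -separable_prod_XsubC -(eqp_separable (eqp_scale _ lc0)) -hrs.
  rewrite unlock coprimep_def; apply/negPn/negP => hg.
  have [z hz] := closed_rootP _ hg.
  move: hz; rewrite root_gcd => /andP [hz1 hz2].
  move: hz2; rewrite /p derivB derivC subr0 => hz2.
  move: (hgood z hz2); move/rootP: hz1; rewrite hev => /eqP; rewrite subr_eq0 => ->.
  by [].
exists rs; split => // Q sQ hQ.
have : \prod_(z <- rs) ('X - z%:P) %| Q.
  apply: uniq_roots_dvdp; last by rewrite uniq_rootsE.
  by apply/allP => r hr; apply/rootP; apply: hQ.
move/dvdpP => [h hh].
have [h0|h0] := eqVneq h 0.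
  by exists 0 => x; rewrite hh h0 mul0r horner0 mul0r.
have pr0 : \prod_(z <- rs) ('X - z%:P) != 0.
  by rewrite -size_poly_eq0 size_prod_XsubC.
have sh : (size h <= 1)%N.
  move: sQ; rewrite hh size_mul // size_prod_XsubC srs addnS /=.
  by rewrite -addn1 addnC leq_add2l.
exists (h`_0 / lead_coef p) => x.
have -> : Q.[x] = h`_0 * (\prod_(z <- rs) ('X - z%:P)).[x].
  by rewrite hh hornerM {1}(size1_polyC sh) hornerC.
have -> : q.[x] - s = lead_coef p * (\prod_(z <- rs) ('X - z%:P)).[x].
  by rewrite -hev {1}hrs hornerZ.
by field.
Qed.

End Poly.



Section PD.
Variable R : realType.
Local Notation CC := (C R).
Variables (a b c e : CC) (n : nat) (q2 : {poly CC}).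

Definition pA : {poly CC} := a%:P * 'X + b%:P.
Definition pB : {poly CC} := c%:P * 'X + e%:P.
Definition Pp : {poly CC} := \sum_(k < n.+1) q2`_k *: (pA ^+ k * pB ^+ (n - k)).
Definition Dp : {poly CC} := pB ^+ n.

Lemma pA_eval x : pA.[x] = a * x + b.
Proof. by rewrite /pA hornerD hornerM hornerX !hornerC. Qed.
Lemma pB_eval x : pB.[x] = c * x + e.
Proof. by rewrite /pB hornerD hornerM hornerX !hornerC. Qed.
Lemma Dp_eval x : Dp.[x] = (c * x + e) ^+ n.
Proof. by rewrite /Dp horner_exp pB_eval. Qed.

Lemma Pp_eval x : size q2 = n.+1 -> c * x + e != 0 ->
  Pp.[x] = (c * x + e) ^+ n * q2.[(a * x + b) / (c * x + e)].
Proof.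
move=> sq hx; rewrite /Pp horner_sum (horner_coef q2) sq mulr_sumr.
apply: eq_bigr => k _.
rewrite hornerZ hornerM !horner_exp pA_eval pB_eval.
have hk : (k <= n)%N by rewrite -ltnS.
have -> : (c * x + e) ^+ n = (c * x + e) ^+ (n - k) * (c * x + e) ^+ k by rewrite -exprD subnK.
rewrite expr_div_n.
field; rewrite expf_neq0 //.
Qed.

Lemma size_pA : (size pA <= 2)%N.
Proof.
rewrite /pA; apply: leq_trans (size_add _ _) _; rewrite geq_max.
apply/andP; split; last by apply: leq_trans (size_polyC_leq1 _) _.
by apply: leq_trans (size_mul_leq _ _) _; rewrite size_polyX addn2 /= ltnS size_polyC_leq1.
Qed.
Lemma size_pB : (size pB <= 2)%N.
Proof.
rewrite /pB; apply: leq_trans (size_add _ _) _; rewrite geq_max.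
apply/andP; split; last by apply: leq_trans (size_polyC_leq1 _) _.
by apply: leq_trans (size_mul_leq _ _) _; rewrite size_polyX addn2 /= ltnS size_polyC_leq1.
Qed.

Lemma size_exp_lin (p : {poly CC}) k : (size p <= 2)%N -> (size (p ^+ k) <= k.+1)%N.
Proof.
move=> hp; apply: leq_trans (size_poly_exp_leq _ _) _.
rewrite ltnS; case: (size p) hp => [|[|[|m]]] //= _; by rewrite ?mul0n ?mul1n.
Qed.

Lemma size_Dp : (size Dp <= n.+1)%N.
Proof. exact: size_exp_lin size_pB. Qed.

Lemma size_Pp : (size Pp <= n.+1)%N.
Proof.
rewrite /Pp; apply: size_sum_le => k.
apply: leq_trans (size_scale_leq _ _) _.
apply: leq_trans (size_mul_leq _ _) _.
have h1 := size_exp_lin k size_pA; have h2 := size_exp_lin (n - k) size_pB.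
have hk : (k <= n)%N by rewrite -ltnS.
apply: leq_trans (_ : ((k.+1 + (n - k).+1).-1 <= n.+1)%N).
  by rewrite -!subn1 leq_sub2r // leq_add.
by rewrite addSn /= addnS subnKC.
Qed.

End PD.



Section Main.
Variable R : realType.
Local Notation CC := (C R).

Lemma cov_some (q : {poly CC}) u v : Cov0 q (Some u) v ->
  exists beta, v = Some beta /\ q.[u] = q.[beta].
Proof. by case: v => [bt|] //= H; exists bt; split => //; case: H => [[_ ->]|[-> _]]. Qed.

Lemma poly_zero_off (W : {poly CC}) (a c : CC) : (c != 0) || (a != 0) ->
  (forall t, c * t != a -> W.[t] = 0) -> W = 0.
Proof.
move=> hac H; apply/eqP/negPn/negP => hW.
have hl : c%:P * 'X - a%:P != 0 :> {poly CC}.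
  apply/negP => /eqP h0.
  have h1 : (c%:P * 'X - a%:P).[0] = 0 by rewrite h0 horner0.
  have h2 : (c%:P * 'X - a%:P).[1] = 0 by rewrite h0 horner0.
  rewrite !hornerE in h1 h2.
  have ha : a = 0 by rewrite -[a]opprK h1 oppr0.
  move: h2; rewrite ha subr0 => hc.
  by move: hac; rewrite ha hc eqxx.
have [t ht] := nonroot (mulf_neq0 hW hl).
move: ht; rewrite hornerM !hornerE /= mulf_eq0 negb_or => /andP [hWt hct].
by move: hWt; rewrite H ?eqxx //; rewrite subr_eq0 in hct.
Qed.

Lemma third (rs : seq CC) x x' : uniq rs -> (2 < size rs)%N ->
  exists2 y, y \in rs & (y != x) && (y != x').
Proof.
move=> hu hs; case: (boolP (has (fun y => (y != x) && (y != x')) rs)) => [/hasP [y hy hy']|hn].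
  by exists y.
have : (size rs <= size [:: x; x'])%N.
  apply: uniq_leq_size => // y hy; rewrite !inE.
  by apply/negPn/negP => hyy; move/hasPn: hn => /(_ y hy); rewrite negb_or in hyy; rewrite hyy.
by rewrite /= leqNgt hs.
Qed.


Lemma inv_pt (a b c e t : CC) : a * e - b * c != 0 -> c * t != a ->
  c * ((e * t - b) / (a - c * t)) + e = (a * e - b * c) / (a - c * t) /\
  (a * ((e * t - b) / (a - c * t)) + b) / (c * ((e * t - b) / (a - c * t)) + e) = t.
Proof.
move=> hd hct; have hac : a - c * t != 0 by rewrite subr_eq0 eq_sym.
have h1 : c * ((e * t - b) / (a - c * t)) + e = (a * e - b * c) / (a - c * t) by field.
split => //; rewrite h1; field; nz.
Qed.

Lemma main_gen (n : nat) (q1 q2 : {poly CC}) (a b c e : CC) (hdet : a * e - b * c != 0)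
  (J1 J2 : mobius R) :
  (2 < n)%N -> size q1 = n.+1 -> size q2 = n.+1 ->
  (forall z, mob_app J2 (mob_app J2 z) = z) ->
  (forall u t, Cov0 q1 u t -> exists v, Cov0 q2 (mob_app (@Mobius R a b c e hdet) u) v /\
       mob_app J2 v = mob_app (@Mobius R a b c e hdet) (mob_app J1 t)) ->
  covering_equivalent q1 q2.
Proof.
move=> n2 sq1 sq2 HJ2 Hfw.
set phi := @Mobius R a b c e hdet.
have n0 : (0 < n)%N by apply: leq_trans n2.
have hphi : forall x, c * x + e != 0 -> mob_app phi (Some x) = Some ((a * x + b) / (c * x + e)).
  by move=> x hx; rewrite /= (negbTE hx).
have chain : forall x x' y, x != y -> x' != y -> q1.[x] = q1.[y] -> q1.[x'] = q1.[y] ->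
    c * x + e != 0 -> c * x' + e != 0 ->
    q2.[(a * x + b) / (c * x + e)] = q2.[(a * x' + b) / (c * x' + e)].
  move=> x x' y hxy hx'y hq hq' hx hx'.
  have [v [hv1 hv2]] := Hfw (Some x) (Some y) (or_introl (conj hxy hq)).
  have [v' [hv1' hv2']] := Hfw (Some x') (Some y) (or_introl (conj hx'y hq')).
  rewrite hphi // in hv1; rewrite hphi // in hv1'.
  have [bt [hvb hbt]] := cov_some hv1; have [bt' [hvb' hbt']] := cov_some hv1'.
  subst v v'.
  have : Some bt = Some bt' :> sphere R by rewrite -(HJ2 (Some bt)) -(HJ2 (Some bt')) hv2 hv2'.
  by case=> hb; rewrite hbt hbt' hb.
have hd0 : q1^`() != 0.
  apply/negP => /eqP h0.
  have : q1^`()`_n.-1 = 0 by rewrite h0 coef0.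
  rewrite coef_deriv prednK // => /eqP; rewrite mulrn_eq0 /= -[n]/(n.+1.-1) -sq1 -lead_coefE.
  by rewrite lead_coef_eq0 -size_poly_eq0 sq1 gtn_eqF // ltn0Sn.
have [rsd hrsd] := closed_field_poly_normal q1^`().
pose B := rcons [seq q1.[z] | z <- rsd] q1.[- e / c].
have good1 : forall s, s \notin B -> forall z, root q1^`() z -> q1.[z] != s.
  move=> s hs z hz; apply: contraNneq hs => <-.
  rewrite /B mem_rcons inE; apply/orP; right; apply/mapP; exists z => //.
  by move: hz; rewrite {1}hrsd rootZ ?lead_coef_eq0 // root_prod_XsubC.
have good2 : forall s, s \notin B -> forall r, q1.[r] = s -> c * r + e != 0.
  move=> s hs r hr; apply/negP => /eqP hre.
  have hc : c != 0.
    apply/negP => /eqP hc; have he : e = 0 by rewrite -hre hc mul0r add0r.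
    by have := hdet; rewrite hc he !mulr0 subrr eqxx.
  have hrr : r = - e / c.
    have -> : e = - (c * r) by apply/eqP; rewrite -addr_eq0 addrC hre.
    by field.
  by move: hs; rewrite /B mem_rcons inE -hr hrr eqxx.
pose P := Pp a b c e n q2; pose D := Dp c e n.
have PE : forall x, c * x + e != 0 -> P.[x] = (c * x + e) ^+ n * q2.[(a * x + b) / (c * x + e)].
  by move=> x hx; rewrite /P (Pp_eval a b sq2 hx).
have DE : forall x, D.[x] = (c * x + e) ^+ n by move=> x; exact: Dp_eval.
have fib : forall s, s \notin B -> exists k lam r,
    [/\ forall x, P.[x] - k * D.[x] = lam * (q1.[x] - s), q1.[r] = s & D.[r] != 0].
  move=> s hs.
  have [rs [hu hsz hrt hdv]] := good_fiber sq1 n0 (good1 s hs).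
  have hcr : forall r, r \in rs -> c * r + e != 0 by move=> r hr; exact: good2 s hs r (hrt r hr).
  pose r0 := nth 0 rs 0.
  have r0in : r0 \in rs by rewrite mem_nth // hsz.
  pose k := q2.[(a * r0 + b) / (c * r0 + e)].
  have hk : forall r, r \in rs -> q2.[(a * r + b) / (c * r + e)] = k.
    move=> r hr; have [->|hne] := eqVneq r r0; first by [].
    have [y hy /andP [hy1 hy2]] := third r r0 hu ltac:(by rewrite hsz).
    apply: (chain r r0 y).
    - by rewrite eq_sym.
    - by rewrite eq_sym.
    - by rewrite (hrt r hr) (hrt y hy).
    - by rewrite (hrt r0 r0in) (hrt y hy).
    - exact: hcr.
    - exact: hcr.
  have [lam hlam] : exists lam, forall x, (P - k *: D).[x] = lam * (q1.[x] - s).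
    apply: hdv.
  - apply: leq_trans (size_add _ _) _; rewrite geq_max size_opp size_Pp /=.
    by apply: leq_trans (size_scale_leq _ _) (size_Dp _ _ _).
  - move=> r hr; rewrite hornerD hornerN hornerZ PE ?hcr // DE hk //; ring.
  exists k, lam, r0; split; last by rewrite DE expf_neq0 // hcr.
  - by move=> x; rewrite -hlam hornerD hornerN hornerZ.
  - exact: hrt.
have hac : (c != 0) || (a != 0).
  apply/negPn/negP; rewrite negb_or !negbK => /andP [/eqP hc /eqP ha].
  by have := hdet; rewrite hc ha mul0r mulr0 subrr eqxx.
have G : forall kk, exists x, P.[x] != kk * D.[x].
  move=> kk; apply/not_all_not_ex => H.
  have hW : q2 - kk%:P = 0.
    apply: (poly_zero_off hac) => t ht.
    have [hx1 hx2] := inv_pt hdet ht.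
    set x := (e * t - b) / (a - c * t) in hx1 hx2.
    have hx : c * x + e != 0 by rewrite hx1 mulf_neq0 // invr_eq0 subr_eq0 eq_sym.
    have := H x; move/negP/negPn/eqP; rewrite PE // DE hx2 hornerD hornerN hornerC => hh.
    apply/eqP; rewrite subr_eq0; apply/eqP.
    by apply: (mulfI (expf_neq0 n hx)); rewrite hh mulrC.
  move: sq2; have -> : q2 = kk%:P by apply/eqP; rewrite -subr_eq0 hW.
  by move=> h; have := size_polyC_leq1 kk; rewrite h ltnS leqn0 => /eqP hn; move: n0; rewrite hn.
have [s1 hs1] := avoid B.
have [s2 hs2'] := avoid (s1 :: B).
move: hs2'; rewrite in_cons negb_or => /andP [hs12 hs2].
have [k1 [l1 [r1 [F1 hr1 hD1]]]] := fib s1 hs1.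
have [k2 [l2 [r2 [F2 hr2 hD2]]]] := fib s2 hs2.
have l1n0 : l1 != 0.
  apply/negP => /eqP l0; have [x hx] := G k1; move: hx.
  by have := F1 x; rewrite l0 mul0r => /eqP; rewrite subr_eq0 => ->.
have hs12' : s1 - s2 != 0 by rewrite subr_eq0 eq_sym.
have hk12 : k2 - k1 != 0.
  rewrite subr_eq0; apply/negP => /eqP hk.
  have l20 : l2 = 0.
    have := F1 r1; have := F2 r1; rewrite hr1 -hk subrr mulr0 => -> /eqP.
    by rewrite mulf_eq0 (negbTE hs12') orbF => /eqP.
  have := F1 r2; have := F2 r2; rewrite hr2 -hk l20 mul0r => -> /eqP.
  rewrite eq_sym mulf_eq0 (negbTE l1n0) /= subr_eq0 => /eqP h.
  by move: hs12; rewrite h eqxx.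
pose al := (l1 - l2) / (k2 - k1).
pose be := (l2 * s2 - l1 * s1) / (k2 - k1).
pose al' := k1 * al + l1.
pose be' := k1 * be - l1 * s1.
have E1 : forall x, D.[x] = al * q1.[x] + be.
  move=> x; apply: (mulfI hk12).
  have -> : (k2 - k1) * D.[x] = (P.[x] - k1 * D.[x]) - (P.[x] - k2 * D.[x]) by ring.
  rewrite F1 F2 /al /be; field; nz.
have E2 : forall x, P.[x] = al' * q1.[x] + be'.
  move=> x; have -> : P.[x] = (P.[x] - k1 * D.[x]) + k1 * D.[x] by ring.
  by rewrite F1 E1 /al' /be'; ring.
have hdet' : al' * be - be' * al != 0.
  have -> : al' * be - be' * al = l1 * (al * s1 + be) by rewrite /al' /be'; ring.
  by rewrite -hr1 -E1 mulf_neq0.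
pose psi := @Mobius R al' be' al be hdet'.
have V : forall y, poly_sphere q2 (mob_app phi y) = mob_app psi (poly_sphere q1 y).
  case=> [x|] /=.
  - rewrite -E1 -E2 DE.
    have [hx|hx] := eqVneq (c * x + e) 0.
      by rewrite hx expr0n /= gtn_eqF // eqxx.
    rewrite expf_eq0 (negbTE hx) andbF /=; congr Some.
    rewrite PE //; field; rewrite expf_neq0 //.
  - have [hc|hc] := eqVneq c 0.
    + have al0 : al = 0.
        have h1 := E1 r1; have h2 := E1 r2; rewrite !DE hc !mul0r !add0r hr1 hr2 in h1 h2.
        have : al * (s1 - s2) = (al * s1 + be) - (al * s2 + be) by ring.
        by rewrite -h1 -h2 subrr => /eqP; rewrite mulf_eq0 (negbTE hs12') orbF => /eqP.
      by rewrite al0 eqxx.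
    + have al0 : al != 0.
        apply/negP => /eqP al0; have := E1 (- e / c); rewrite DE al0 mul0r add0r.
        have -> : c * (- e / c) + e = 0 by field.
        rewrite expr0n gtn_eqF //= => hbe.
        by move: hD1; rewrite E1 al0 mul0r add0r -hbe eqxx.
      rewrite (negbTE al0) /=; congr Some.
      pose gam := be' - al' * be / al.
      pose W := (q2 - (al' / al)%:P) * ((a * e - b * c) ^+ n)%:P - gam *: (a%:P - c%:P * 'X) ^+ n.
      have hW : W = 0.
        apply: (poly_zero_off hac) => t ht.
        have [hx1 hx2] := inv_pt hdet ht.
        set x := (e * t - b) / (a - c * t) in hx1 hx2.
        have hct : a - c * t != 0 by rewrite subr_eq0 eq_sym.
        have hx : c * x + e != 0 by rewrite hx1 mulf_neq0 // invr_eq0.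
        have hP := E2 x; have hD := E1 x; rewrite PE // hx2 in hP; rewrite DE in hD.
        have hdt : a * e - b * c = (c * x + e) * (a - c * t) by rewrite hx1; field.
        rewrite /W !hornerE hdt exprMn.
        apply/eqP; rewrite subr_eq0; apply/eqP.
        have -> : (q2.[t] - al' / al) * ((c * x + e) ^+ n * (a - c * t) ^+ n) =
          ((c * x + e) ^+ n * q2.[t] - al' / al * (c * x + e) ^+ n) * (a - c * t) ^+ n by ring.
        rewrite hP hD /gam; field; nz.
      have h0 : W.[a / c] = 0 by rewrite hW horner0.
      move: h0; rewrite /W !(hornerD, hornerN, hornerZ, horner_exp, hornerM, hornerC, hornerX).
      have -> : a - c * (a / c) = 0 by field.
      rewrite expr0n gtn_eqF //= mulr0 subr0 => /eqP; rewrite mulf_eq0 expf_eq0 (negbTE hdet) andbF orbF.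
      by rewrite subr_eq0 => /eqP.
exists (mob_inv phi), psi => z.
by rewrite -{1}(mob_invK phi z) V.
Qed.

End Main.



Section Quad.
Variable R : realType.
Local Notation CC := (C R).

Lemma horner3 (q : {poly CC}) x : size q = 3 -> q.[x] = q`_0 + q`_1 * x + q`_2 * x ^+ 2.
Proof.
move=> sq; rewrite horner_coef sq !big_ord_recr big_ord0 /= add0r expr0 expr1 mulr1.
by [].
Qed.

Lemma lc3 (q : {poly CC}) : size q = 3 -> q`_2 != 0.
Proof.
by move=> sq; have := lead_coef_eq0 q; rewrite lead_coefE sq /= => ->; rewrite -size_poly_eq0 sq.
Qed.

Lemma quad_equiv (q1 q2 : {poly CC}) : size q1 = 3 -> size q2 = 3 -> covering_equivalent q1 q2.
Proof.
move=> s1 s2; have l1 := lc3 s1; have l2 := lc3 s2.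
pose h1 := q1`_1 / (2 * q1`_2); pose h2 := q2`_1 / (2 * q2`_2).
pose k1 := q1`_0 - q1`_1 ^+ 2 / (4 * q1`_2); pose k2 := q2`_0 - q2`_1 ^+ 2 / (4 * q2`_2).
have hphi : (1 : CC) * 1 - (h2 - h1) * 0 != 0 by rewrite mulr0 subr0 mulr1 oner_eq0.
have hpsi : q2`_2 / q1`_2 * 1 - (k2 - k1 * (q2`_2 / q1`_2)) * 0 != 0.
  by rewrite mulr0 subr0 mulr1 mulf_neq0 // invr_eq0.
exists (@Mobius R 1 (h2 - h1) 0 1 hphi), (@Mobius R (q2`_2 / q1`_2) (k2 - k1 * (q2`_2 / q1`_2)) 0 1 hpsi).
case=> [x|] /=; last by rewrite !eqxx.
rewrite !mul0r !add0r oner_eq0 /= mul0r add0r oner_eq0 /=; congr Some.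
rewrite !horner3 // /h1 /h2 /k1 /k2.
have t2 : (2 : CC) != 0 by rewrite pnatr_eq0.
have t4 : (4 : CC) != 0 by rewrite pnatr_eq0.
field; nz.
Qed.

End Quad.


End Aux.
Import Aux.

Theorem mainTheorem8 (R : realType) (d : nat) (J1 J2 : mobius R)
  (q1 q2 : {poly C R}) :
  (0 < d)%N ->
  mob_involution J1 -> mob_involution J2 ->
  size q1 = d.+2 -> size q2 = d.+2 ->
  conformally_conjugate (corr_comp (graph (mob_app J1)) (Cov0 q1))
                        (corr_comp (graph (mob_app J2)) (Cov0 q2)) ->
  conformally_conjugate (graph (mob_app J1)) (graph (mob_app J2))
  /\ covering_equivalent q1 q2.
Proof.
move=> d0 H1 H2 s1 s2 [phi Hphi]; split; first exact: inv_conj.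
case: (ltnP 1 d) => hd; last first.
  have hd1 : d = 1%N by apply/eqP; rewrite eqn_leq hd d0.
  by subst d; apply: quad_equiv.
have Hfw : forall u t, Cov0 q1 u t -> exists v, Cov0 q2 (mob_app phi u) v /\
    mob_app J2 v = mob_app phi (mob_app J1 t).
  move=> u t hut.
  have [v [hv1 hv2]] := (Hphi (mob_app phi u) (mob_app phi (mob_app J1 t))).2
    (ex_intro _ (mob_app J1 t) (conj (ex_intro _ u (conj erefl (ex_intro _ t (conj hut erefl)))) erefl)).
  by exists v.
move: Hfw; case: phi {Hphi} => a b c e hdet Hfw.
apply: (main_gen (n := d.+1) _ s1 s2 H2.1 Hfw).
by [].
Qed.
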